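(* A strong erasing word for $(G,\phi)$ exists in each of the following cases: (i) $G$ is a non-bipartite separable graph and $\phi$ is any admissible matching policy; (ii) $G$ is connected and non-bipartite and $\phi=\textsc{lcfm}$.
   Context: $G=(\mathcal V,\mathcal E)$ is a finite connected simple graph, $i - j$ denotes adjacency. $G$ is separable of order $p\ge2$ if $\mathcal V$ is partitioned into maximal independent sets $\mathcal I_1,\dots,\mathcal I_p$ such that any two nodes in different parts are adjacent; a separable graph is non-bipartite iff $p\ge3$. A list of preferences $\sigma\in\mathcal S$ gives for each class a linear ordering of its neighbours; $\phi$ comes with a probability $\nu_\phi$ on $\mathcal S$. $\mathbb W=\{w\in\mathcal V^*:|w|_i|w|_j=0 \text{ whenever } i - j\}$. Admissible $\phi$: a map $\odot_\phi:\mathbb W\times(\mathcal V\times\mathcal S)\to\mathbb W$ with $w\odot_\phi(v,\sigma)=wv$ if no letter of $w$ is adjacent to $v$, otherwise $w$ with one letter adjacent to $v$ (chosen by $\phi$) deleted; LCFM deletes the rightmost letter of $w$ adjacent to $v$. $Q_\phi(z_1\cdots z_k,\varsigma_1\cdots\varsigma_k)=(\cdots(\emptyset\odot_\phi(z_1,\varsigma_1))\cdots)\odot_\phi(z_k,\varsigma_k)$. A word $z\in\mathcal V^*$ of even length $2p$ is a strong erasing word for $(G,\phi)$ if (1) for all non-adjacent $i,j\in\mathcal V$ (possibly $i=j$) and all preference words $\varsigma,\varsigma'$ of lengths $2$ and $2p$ with letters in the support of $\nu_\phi$, $Q_\phi(ijz,\varsigma\varsigma')=\emptyset$; and (2) for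 every $\ell\in\{0,\dots,p-1\}$ and all such $\varsigma'$, $Q_\phi(z_{2\ell+1}\cdots z_{2p},\varsigma'_{2\ell+1}\cdots\varsigma'_{2p})=\emptyset$. *)

(* Defs.v *)
From mathcomp Require Import all_boot.
Set Implicit Arguments. Unset Strict Implicit. Unset Printing Implicit Defensive.

Section Defs.
Variables (V : finType) (e : rel V).

Definition bipartite : Prop := exists c : V -> bool, forall x y, e x y -> c x != c y.

Definition separable_of_order (p : nat) : Prop :=
  2 <= p /\ exists f : V -> 'I_p, (forall k, exists x, f x = k) /\
                                  (forall x y, e x y = (f x != f y)).
Definition separable : Prop := exists p, separable_of_order p.

Definition prefs := {s : V -> seq V | forall i, uniq (s i) /\ perm_eq (s i) (enum (e i))}.

Definition inW (w : seq V) : bool := all (fun x => all (fun y => ~~ e x y) w) w.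

Definition admissible (op : seq V -> V -> prefs -> seq V) : Prop :=
  forall w v s, inW w ->
    (~~ has (e v) w -> op w v s = rcons w v) /\
    (has (e v) w -> exists2 k, k < size w &
        e (nth v w k) v /\ op w v s = take k w ++ drop k.+1 w).

(* LCFM: delete the rightmost letter of w adjacent to v *)
Definition lcfm (w : seq V) (v : V) (s : prefs) : seq V :=
  if has (e v) w then
    let k := size w - (find (e v) (rev w)).+1 in take k w ++ drop k.+1 w
  else rcons w v.

Fixpoint Qrun (op : seq V -> V -> prefs -> seq V) (w : seq V)
         (z : seq V) (ss : seq prefs) : seq V :=
  match z, ss with
  | x :: z', s :: ss' => Qrun op (op w x s) z' ss'
  | _, _ => w
  end.

Definition Q op z ss := Qrun op [::] z ss.

(* strong erasing word, supp = support of nu_phi *)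
Definition strong_erasing (op : seq V -> V -> prefs -> seq V) (supp : pred prefs)
  (z : seq V) : Prop :=
  ~~ odd (size z) /\
  (forall i j, ~~ e i j -> forall s s' : seq prefs,
      size s = 2 -> size s' = size z -> all supp s -> all supp s' ->
      Q op (i :: j :: z) (s ++ s') = [::]) /\
  (forall l, l < (size z)./2 -> forall s' : seq prefs,
      size s' = size z -> all supp s' ->
      Q op (drop l.*2 z) (drop l.*2 s') = [::]).

End Defs.

(* Main.v *)
Require Import Defs.
From mathcomp Require Import all_boot zify.
Set Implicit Arguments. Unset Strict Implicit. Unset Printing Implicit Defensive.

Fixpoint pairs (V : eqType) (e : rel V) (z : seq V) : bool :=
  match z with
  | x :: y :: z' => e x y && pairs e z'
  | [::] => true
  | _ => false
  end.

Lemma pairsP (V : eqType) (e : rel V) (P : seq V -> Prop) :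
  P [::] -> (forall x y z, e x y -> pairs e z -> P z -> P [:: x, y & z]) ->
  forall z, pairs e z -> P z.
Proof.
move=> H0 HS z; move: {2}(size z) (leqnn (size z)) => n.
elim: n z => [|n IH] [|x [|y z]] //= Hs Hp.
move/andP: Hp => [Hxy Hz]; apply: HS => //; apply: IH => //; lia.
Qed.

Lemma pairs_cat (V : eqType) (e : rel V) z1 z2 :
  pairs e z1 -> pairs e z2 -> pairs e (z1 ++ z2).
Proof.
move=> H1 H2; move: z1 H1; apply: (pairsP (e:=e)) => //= x y z Hxy _ IH.
by rewrite Hxy IH.
Qed.

Lemma pairs_drop (V : eqType) (e : rel V) l z :
  pairs e z -> pairs e (drop l.*2 z).
Proof.
elim: l z => [|l IH] z; first by rewrite drop0.
case: z => [|x [|y z]] //= /andP [_ Hz].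
by apply: IH.
Qed.

Lemma pairs_even (V : eqType) (e : rel V) z : pairs e z -> ~~ odd (size z).
Proof. by move: z; apply: (pairsP (e:=e)) => //= x y z _ _; rewrite negbK. Qed.

Lemma Qrun_pairs (V : finType) (e : rel V) (op : seq V -> V -> prefs e -> seq V) :
  (forall x s, op [::] x s = [:: x]) ->
  (forall x y s, e x y -> op [:: x] y s = [::]) ->
  forall z ss, pairs e z -> size z <= size ss -> Qrun op [::] z ss = [::].
Proof.
move=> H1 H2 z ss Hz; move: z Hz ss; apply: (pairsP (e:=e)) => [|x y z Hxy _ IH] [|s1 [|s2 ss]] //=.
by rewrite H1 H2 //; move=> H; apply: IH.
Qed.

Definition lc (V : finType) (e : rel V) (w : seq V) (v : V) : seq V :=
  if has (e v) w then
    let k := size w - (find (e v) (rev w)).+1 in take k w ++ drop k.+1 w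
  else rcons w v.

Fixpoint run (V : finType) (e : rel V) (w z : seq V) : seq V :=
  match z with x :: z' => run e (lc e w x) z' | [::] => w end.

Lemma Qrun_run (V : finType) (e : rel V) z w ss :
  size z <= size ss -> Qrun (@lcfm V e) w z ss = run e w z.
Proof. by elim: z w ss => [|x z IH] w [|s ss] //= H; rewrite IH. Qed.

Lemma run_cat (V : finType) (e : rel V) w z1 z2 : run e w (z1 ++ z2) = run e (run e w z1) z2.
Proof. by elim: z1 w => //= x z IH w. Qed.

Lemma lc0 (V : finType) (e : rel V) x : lc e [::] x = [:: x].
Proof. by []. Qed.

Lemma lc1 (V : finType) (e : rel V) x y : lc e [:: x] y = if e y x then [::] else [:: x; y].
Proof. by rewrite /lc /= orbF; case: (e y x). Qed.

Lemma lc2a (V : finType) (e : rel V) o t x : e x t -> lc e [:: o; t] x = [:: o].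
Proof. by move=> H; rewrite /lc /= H orbT /=. Qed.

Lemma lc2b (V : finType) (e : rel V) i j x : ~~ e x j -> e x i -> lc e [:: i; j] x = [:: j].
Proof. by move=> /negbTE H H'; rewrite /lc /= H H' /=. Qed.

Lemma lc2c (V : finType) (e : rel V) i j x : ~~ e x j -> ~~ e x i -> lc e [:: i; j] x = [:: i; j; x].
Proof. by move=> /negbTE H /negbTE H'; rewrite /lc /= H H' /=. Qed.

Lemma lc3 (V : finType) (e : rel V) i j x y : e y x -> lc e [:: i; j; x] y = [:: i; j].
Proof. by move=> H; rewrite /lc /= H !orbT /=. Qed.

Lemma run_nil (V : finType) (e : rel V) (e_sym : symmetric e) z : pairs e z -> run e [::] z = [::].
Proof.
move: z; apply: (pairsP (e:=e)) => //= x y z Hxy _ IH.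
by rewrite lc1 e_sym Hxy.
Qed.

Lemma reachB (V : finType) (e : rel V) (e_sym : symmetric e) z : pairs e z ->
  forall i j, ~~ e i j -> run e [:: i; j] z = [::] \/
    exists i' j', ~~ e i' j' /\ run e [:: i; j] z = [:: i'; j'].
Proof.
move: z; apply: (pairsP (e:=e)) => [|x y z Hxy Hz IH] i j Hij /=.
  by right; exists i, j.
have Hyx : e y x by rewrite e_sym.
case Hxj: (e x j).
  rewrite lc2a // lc1; case Hyi: (e y i); first by left; apply: run_nil.
  by apply: IH; rewrite e_sym Hyi.
case Hxi: (e x i).
  rewrite lc2b ?Hxj // lc1; case Hyj: (e y j); first by left; apply: run_nil.
  by apply: IH; rewrite e_sym Hyj.
by rewrite lc2c ?Hxj ?Hxi // lc3 //; apply: IH.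
Qed.

Definition E (V : finType) (e : rel V) : rel (V * bool) :=
  fun u v => e u.1 v.1 && (v.2 == ~~ u.2).

Lemma F1 (V : finType) (e : rel V) a x : connect e a x ->
  forall b, exists c, connect (E e) (a, b) (x, c).
Proof.
move/connectP=> [p Hp ->]; elim: p a Hp => [|y p IH] a /= Hp b.
  by exists b; exact: connect0.
move/andP: Hp => [Hay Hp]; have [c Hc] := IH y Hp (~~ b).
exists c; apply: connect_trans Hc; apply: connect1; by rewrite /E /= Hay eqxx.
Qed.

Lemma Esym (V : finType) (e : rel V) (e_sym : symmetric e) : connect_sym (E e).
Proof.
apply: sym_connect_sym => -[x b] [y c]; rewrite /E /= e_sym.
by case: b; case: c.
Qed.

Lemma Eflip (V : finType) (e : rel V) x y b c :
  connect (E e) (x, b) (y, c) -> connect (E e) (x, ~~ b) (y, ~~ c).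
Proof.
move/connectP=> [p Hp Hl].
elim: p x b Hp Hl => [|[z d] p IH] x b /= Hp Hl.
  by case: Hl => -> ->; exact: connect0.
move/andP: Hp => [H1 Hp]; apply: connect_trans (IH _ _ Hp Hl).
apply: connect1; move: H1; rewrite /E /= => /andP [-> /eqP ->]; by rewrite eqxx.
Qed.

Lemma odd_closed (V : finType) (e : rel V) (e_sym : symmetric e)
  (e_conn : forall x y, connect e x y) :
  ~ bipartite e -> forall a, connect (E e) (a, false) (a, true).
Proof.
move=> Hnb a; case H: (connect (E e) (a, false) (a, true)) => //; exfalso; apply: Hnb.
have Uq : forall y c, connect (E e) (a, false) (y, c) -> connect (E e) (a, false) (y, ~~ c) -> False.
  move=> y c H1 H2.
  have K : forall c', connect (E e) (a, false) (y, c') -> connect (E e) (a, false) (y, ~~ c') ->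
      connect (E e) (a, false) (a, true).
    move=> [] H3 H4.
      apply: connect_trans H3 _; rewrite (Esym e_sym) in H4.
      by have := Eflip H4.
    apply: connect_trans H4 _; rewrite (Esym e_sym) in H3.
    by have := Eflip H3.
  by rewrite (K c H1 H2) in H.
pose col x := connect (E e) (a, false) (x, true).
have Hx : forall x, connect (E e) (a, false) (x, col x).
  move=> x; have [c Hc] := F1 (e_conn a x) false.
  rewrite /col; case Ht: (connect (E e) (a, false) (x, true)) => //.
  by case: c Hc => //; rewrite Ht.
exists col => x y Hxy; apply/negP => /eqP Hc.
have H1 : connect (E e) (a, false) (y, ~~ col x).
  apply: connect_trans (Hx x) _; apply: connect1; by rewrite /E /= Hxy eqxx.
by apply: (Uq y (col y)); [exact: Hx | rewrite -Hc].
Qed.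

Lemma even_walk (V : finType) (e : rel V) (e_sym : symmetric e)
  (e_conn : forall x y, connect e x y) :
  ~ bipartite e -> forall a x, connect (E e) (a, false) (x, false).
Proof.
move=> Hnb a x; have [[] Hc] := F1 (e_conn a x) false => //.
apply: connect_trans (odd_closed e_sym e_conn Hnb a) _.
by have := Eflip Hc.
Qed.

Lemma walk (V : finType) (e : rel V) (e_sym : symmetric e) o n : e o n ->
  forall p u, path (E e) u p -> last u p = (n, false) ->
  (forall v, u = (v, false) -> exists z, pairs e z && (run e [:: o; v] z == [::])) /\
  (forall x, u = (x, true) -> exists y z, [&& e x y, pairs e z & run e [:: o] (y :: z) == [::]]).
Proof.
move=> Hon; elim=> [|[w b] p IH] u /=.
  move=> _ ->; split => [v [<-]|x //].
  exists [:: o; n]; rewrite /= Hon /= lc2a //= lc1 e_sym Hon //.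
move=> /andP [Huw Hp] Hl; have [IHe IHo] := IH _ Hp Hl.
split.
  move=> v Hu; move: Huw; rewrite Hu /E /= => /andP [Hvw /eqP Hb].
  have [y [z /and3P [Hwy Hz Hr]]] := IHo w (congr1 (pair w) Hb).
  exists [:: w, y & z]; rewrite /= Hwy Hz /= lc2a ?(e_sym w) //.
move=> x Hu; move: Huw; rewrite Hu /E /= => /andP [Hxw /eqP Hb].
have [z /andP [Hz Hr]] := IHe w (congr1 (pair w) Hb).
exists w, z; rewrite Hxw Hz /= lc1; case: (e w o) => //.
by rewrite run_nil.
Qed.

Lemma neighbor (V : finType) (e : rel V) (e_conn : forall x y, connect e x y) :
  ~ bipartite e -> forall o, exists n, e o n.
Proof.
move=> Hnb o; case H: [exists x, exists y, e x y].
  move/existsP: H => [u /existsP [w Huw]].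
  move/connectP: (e_conn o u) => [[|b p] /= Hp Hu].
    by exists w; rewrite -Hu.
  by move/andP: Hp => [Hob _]; exists b.
exfalso; apply: Hnb; exists (fun _ => true) => x y Hxy.
have : [exists x, exists y, e x y] by apply/existsP; exists x; apply/existsP; exists y.
by rewrite H.
Qed.

Lemma killable (V : finType) (e : rel V) (e_sym : symmetric e)
  (e_conn : forall x y, connect e x y) : ~ bipartite e ->
  forall o t, exists z, pairs e z && (run e [:: o; t] z == [::]).
Proof.
move=> Hnb o t; have [n Hon] := neighbor e_conn Hnb o.
move/connectP: (even_walk e_sym e_conn Hnb t n) => [p Hp Hl].
have [H _] := walk e_sym Hon Hp (esym Hl).
exact: H.
Qed.

Lemma universal (V : finType) (e : rel V) (e_sym : symmetric e)
  (e_conn : forall x y, connect e x y) : ~ bipartite e ->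
  forall L : seq (V * V), exists z, pairs e z &&
    all (fun q => e q.1 q.2 || (run e [:: q.1; q.2] z == [::])) L.
Proof.
move=> Hnb; elim=> [|[i j] L [z0 /andP [Hz0 HL]]]; first by exists [::].
have HL' : forall z1, pairs e z1 ->
    all (fun q => e q.1 q.2 || (run e [:: q.1; q.2] (z0 ++ z1) == [::])) L.
  move=> z1 Hz1; apply/allP => q Hq; move/allP: HL => /(_ q Hq) /orP [->//|/eqP H].
  by rewrite run_cat H run_nil // orbT.
case Hij: (e i j).
  by exists z0; rewrite Hz0 /= Hij HL.
have [H|[i' [j' [_ H]]]] := reachB e_sym Hz0 (negbT Hij).
  by exists z0; rewrite Hz0 /= H eqxx orbT HL.
have [z1 /andP [Hz1 Hr]] := killable e_sym e_conn Hnb i' j'.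
by exists (z0 ++ z1); rewrite pairs_cat // /= HL' // run_cat H Hr orbT.
Qed.

Lemma part2 (V : finType) (e : rel V) (e_sym : symmetric e)
  (e_conn : forall x y, connect e x y) :
  ~ bipartite e ->
     forall supp : pred (prefs e), (exists s, supp s) ->
     exists z : seq V, strong_erasing (@lcfm V e) supp z.
Proof.
move=> Hnb supp _.
have [z /andP [Hz HL]] := universal e_sym e_conn Hnb (enum {: V * V}).
exists z; split; first exact: pairs_even Hz.
split.
  move=> i j Hij s s' Hs Hs' _ _; rewrite /Q Qrun_run; last by rewrite size_cat Hs Hs'.
  rewrite /= lc1 e_sym (negbTE Hij).
  have : (i, j) \in enum {: V * V} by rewrite mem_enum.
  by move/(allP HL) => /=; rewrite (negbTE Hij) /= => /eqP.
move=> l _ s' Hs' _; rewrite /Q Qrun_run; last by rewrite !size_drop Hs'.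
by rewrite run_nil // pairs_drop.
Qed.

Definition nxt (p : nat) (V : finType) (f : V -> 'I_p) (st : 'I_p * nat) (v : V) :=
  if (st.2 == 0) || (f v == st.1) then (f v, st.2.+1) else (st.1, st.2.-1).

Definition rz (p : nat) (V : finType) (f : V -> 'I_p) (st : 'I_p * nat) (w : seq V) :=
  all (fun x => f x == st.1) w && (size w == st.2).

Lemma step (p : nat) (V : finType) (e : rel V) (f : V -> 'I_p)
  (He : forall x y, e x y = (f x != f y)) (op : seq V -> V -> prefs e -> seq V) :
  admissible op -> forall st w v s, rz f st w -> rz f (nxt f st v) (op w v s).
Proof.
move=> Had [a n] w v s /andP [/= Hall /eqP Hn].
have HW : inW e w.
  apply/allP => x Hx; apply/allP => y Hy; rewrite He negbK.
  by rewrite (eqP (allP Hall x Hx)) (eqP (allP Hall y Hy)).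
have [H1 H2] := Had w v s HW.
rewrite /nxt /=.
case: ifP => Hc.
  rewrite H1; last first.
    apply/hasPn => x Hx; rewrite He negbK.
    case/orP: Hc => [/eqP H0|/eqP ->]; last by rewrite (eqP (allP Hall x Hx)).
    by move: Hx; rewrite -Hn in H0; move/eqP: H0; rewrite size_eq0 => /eqP ->.
  rewrite /rz /= all_rcons eqxx size_rcons Hn eqxx andbT /=.
  case/orP: Hc => [/eqP H0|/eqP ->] //.
  by move/eqP: H0; rewrite -Hn size_eq0 => /eqP ->.
move/negbT: Hc; rewrite negb_or => /andP [Hn0 Hfa].
have Hh : has (e v) w.
  case: w Hall Hn {H1 H2 HW} => [|x w] /=; first by move=> _ H0; rewrite -H0 eqxx in Hn0.
  by move=> /andP [/eqP Hx _] _; rewrite He Hx Hfa.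
have [k Hk [_ ->]] := H2 Hh.
rewrite /rz /= all_cat; apply/andP; split.
  apply/andP; split; apply/allP => x Hx; apply: (allP Hall).
    exact: mem_take Hx.
  exact: mem_drop Hx.
rewrite size_cat size_take size_drop Hk; apply/eqP; lia.
Qed.

Lemma Qrun_rz (p : nat) (V : finType) (e : rel V) (f : V -> 'I_p)
  (He : forall x y, e x y = (f x != f y)) (op : seq V -> V -> prefs e -> seq V) :
  admissible op -> forall z st w ss, rz f st w -> size z <= size ss ->
  rz f (foldl (nxt f) st z) (Qrun op w z ss).
Proof.
move=> Had; elim=> [|x z IH] st w [|s ss] //= Hw Hs.
by apply: IH => //; apply: step.
Qed.

Lemma fold6 (p : nat) (V : finType) (f : V -> 'I_p) u1 u2 u3 :
  f u1 != f u2 -> f u2 != f u3 -> f u3 != f u1 ->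
  forall a, (foldl (nxt f) (a, 2) [:: u1; u2; u2; u3; u3; u1]).2 = 0.
Proof.
move=> H12 H23 H31 a; rewrite /nxt /=.
move: (f u1) (f u2) (f u3) H12 H23 H31 => c1 c2 c3 H12 H23 H31.
have H21 : c2 != c1 by rewrite eq_sym.
have H32 : c3 != c2 by rewrite eq_sym.
have H13 : c1 != c3 by rewrite eq_sym.
case: (c1 =P a) => [E1|N1]; first by subst a; do 6! rewrite ?eqxx ?(negbTE H12) ?(negbTE H21) ?(negbTE H23) ?(negbTE H32) ?(negbTE H31) ?(negbTE H13) /=.
have N1' : a != c1 by apply/eqP => E; apply: N1.
case: (c2 =P a) => [E2|N2]; first by subst a; do 6! rewrite ?eqxx ?(negbTE H12) ?(negbTE H21) ?(negbTE H23) ?(negbTE H32) ?(negbTE H31) ?(negbTE H13) ?(negbTE N1) /=.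
have N2' : a != c2 by apply/eqP => E; apply: N2.
do 6! rewrite ?eqxx ?(negbTE H12) ?(negbTE H21) ?(negbTE H23) ?(negbTE H32) ?(negbTE H31) ?(negbTE H13) ?(negbTE N1') ?(negbTE N2') /=.
done.
Qed.

Lemma part1 (V : finType) (e : rel V) (e_irr : irreflexive e) :
  ((separable e /\ ~ bipartite e) ->
     forall op : seq V -> V -> prefs e -> seq V, admissible op ->
     forall supp : pred (prefs e), (exists s, supp s) ->
     exists z : seq V, strong_erasing op supp z).
Proof.
move=> [[p [Hp [f [Hsurj He]]]] Hnb] op Had supp _.
have Hp3 : 2 < p.
  case: (ltnP 2 p) => // Hle; exfalso; apply: Hnb.
  exists (fun x => val (f x) == 0) => x y; rewrite He -(inj_eq val_inj).
  have Ha : val (f x) < 2 by apply: leq_trans (ltn_ord (f x)) Hle.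
  have Hb : val (f y) < 2 by apply: leq_trans (ltn_ord (f y)) Hle.
  move: (val (f x)) (val (f y)) Ha Hb => a b Ha Hb.
  by case: a Ha => [|[|a]] //; case: b Hb => [|[|b]].
have [u1 Hu1] := Hsurj (Ordinal (ltn_trans (isT : 0 < 2) Hp3)).
have [u2 Hu2] := Hsurj (Ordinal (ltn_trans (isT : 1 < 2) Hp3)).
have [u3 Hu3] := Hsurj (Ordinal Hp3).
have H12 : f u1 != f u2 by rewrite Hu1 Hu2.
have H23 : f u2 != f u3 by rewrite Hu2 Hu3.
have H31 : f u3 != f u1 by rewrite Hu3 Hu1.
have Hadm1 : forall x s, op [::] x s = [:: x].
  by move=> x s; have [H1 _] := Had [::] x s isT; rewrite H1.
have Hadm2 : forall x y s, e x y -> op [:: x] y s = [::].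
  move=> x y s Hxy; have HW : inW e [:: x] by rewrite /inW /= e_irr.
  have [_ H2] := Had [:: x] y s HW.
  have Hh : has (e y) [:: x] by rewrite /= orbF He eq_sym -He Hxy.
  have [k Hk [_ ->]] := H2 Hh.
  by case: k Hk.
set z := [:: u1; u2; u2; u3; u3; u1].
have Hz : pairs e z by rewrite /= !He H12 H23 H31.
exists z; split; first by [].
split.
  move=> i j Hij s s' Hs Hs' _ _.
  have Hfij : f j == f i by rewrite He negbK in Hij; rewrite eq_sym.
  have := @Qrun_rz p V e f He op Had (i :: j :: z) (f i, 0) [::] (s ++ s') isT.
  rewrite size_cat Hs Hs' => /(_ (leqnn _)).
  have E2 : nxt f (nxt f (f i, 0) i) j = (f j, 2) by rewrite /nxt /= Hfij.
  change (foldl (nxt f) (f i, 0) [:: i, j & z]) with (foldl (nxt f) (nxt f (nxt f (f i, 0) i) j) z).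
  rewrite E2 => /andP [_]; rewrite fold6 //.
  by rewrite size_eq0 => /eqP.
move=> l _ s' Hs' _; rewrite /Q; apply: (Qrun_pairs Hadm1 Hadm2).
  exact: pairs_drop.
by rewrite !size_drop Hs'.
Qed.

Theorem mainTheorem11 (V : finType) (e : rel V)
  (e_sym : symmetric e) (e_irr : irreflexive e)
  (e_conn : forall x y, connect e x y) :
  ((separable e /\ ~ bipartite e) ->
     forall op : seq V -> V -> prefs e -> seq V, admissible op ->
     forall supp : pred (prefs e), (exists s, supp s) ->
     exists z : seq V, strong_erasing op supp z)
  /\
  (~ bipartite e ->
     forall supp : pred (prefs e), (exists s, supp s) ->
     exists z : seq V, strong_erasing (@lcfm V e) supp z).
Proof.
split; [exact: part1 | exact: part2].
Qed.
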